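(* Let $\mu_0$ and $\mu_1$ be probabilistic frames on $\mathbb{R}^d$ that are absolutely continuous with respect to Lebesgue measure, and suppose there is a linear map $r(x)=Ax$, with $A\in\mathbb{R}^{d\times d}$ positive semi-definite, such that $r_\#\mu_0=\mu_1$ and $r$ minimizes the 2-Wasserstein transport cost, i.e. $\int\|x-r(x)\|^2d\mu_0(x)=W_2^2(\mu_0,\mu_1)$. Then every measure $\mu_t=(h_t)_\#\mu_0$, $h_t(x)=(1-t)x+tr(x)$, $t\in[0,1]$, on the geodesic between $\mu_0$ and $\mu_1$ has support which spans $\mathbb{R}^d$, and is therefore a probabilistic frame.
   Context: A probabilistic frame is a probability measure on $\mathbb{R}^d$ with finite second moment whose support spans $\mathbb{R}^d$. $W_2^2(\mu_0,\mu_1)=\inf_\gamma\iint\|x-y\|^2d\gamma(x,y)$ over couplings $\gamma$ of $\mu_0,\mu_1$. $T_\#\mu$ denotes the pushforward of $\mu$ by $T$. *)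

(* Defs.v *)
From HB Require Import structures.
From mathcomp Require Import all_boot all_order all_algebra.
From mathcomp Require Import all_classical all_reals all_analysis.
Set Implicit Arguments. Unset Strict Implicit. Unset Printing Implicit Defensive.
Import Order.TTheory GRing.Theory Num.Theory.
Import numFieldNormedType.Exports.
Local Open Scope classical_set_scope.
Local Open Scope ring_scope.

Section Defs.
Context (R : realType) (d : nat).

Definition enorm2 (x : 'rV[R]_d) : R := \sum_(i < d) (x 0 i) ^+ 2.

Definition eball (x : 'rV[R]_d) (e : R) : set 'rV[R]_d :=
  [set y | enorm2 (y - x) < e ^+ 2].

Definition eopen (U : set 'rV[R]_d) : Prop :=
  forall x, U x -> exists2 e : R, 0 < e & eball x e `<=` U.

Definition borel_sets : set (set 'rV[R]_d) := eopen.

End Defs.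

Notation Rd R d := (g_sigma_algebraType (@borel_sets R d)).

Section Defs2.
Context (R : realType) (d : nat).
Local Notation E := (Rd R d).

(* Lebesgue null sets: coverable by countably many open boxes of
   arbitrarily small total volume (Lebesgue outer measure zero). *)
Definition box (a b : 'rV[R]_d) : set 'rV[R]_d :=
  [set x | forall i, a 0 i < x 0 i < b 0 i].

Definition box_vol (a b : 'rV[R]_d) : R := \prod_(i < d) (b 0 i - a 0 i).

Definition lebesgue_null (N : set 'rV[R]_d) : Prop :=
  forall eps : R, 0 < eps -> exists (a b : nat -> 'rV[R]_d),
    (forall n i, a n 0 i < b n 0 i) /\
    N `<=` \bigcup_n box (a n) (b n) /\
    (\sum_(0 <= n <oo) (box_vol (a n) (b n))%:E < eps%:E)%E.

Definition abs_cont_leb (mu : set E -> \bar R) : Prop :=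
  forall A : set E, measurable A -> lebesgue_null A -> mu A = 0%E.

Definition msupport (mu : set E -> \bar R) : set 'rV[R]_d :=
  [set x | forall e : R, 0 < e -> (0 < mu (eball x e))%E].

Definition lin_span (S : set 'rV[R]_d) : set 'rV[R]_d :=
  [set v | exists n (c : 'I_n -> R) (x : 'I_n -> 'rV[R]_d),
     (forall j, S (x j)) /\ v = \sum_(j < n) c j *: x j].

Definition spans_Rd (S : set 'rV[R]_d) : Prop := lin_span S = setT.

Definition finite_second_moment (mu : set E -> \bar R) : Prop :=
  (\int[mu]_x (enorm2 x)%:E < +oo)%E.

Definition frame_conditions (mu : set E -> \bar R) : Prop :=
  finite_second_moment mu /\ spans_Rd (msupport mu).

Definition prob_frame (mu : probability E R) : Prop := frame_conditions mu.

Definition coupling (mu0 mu1 : probability E R)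
    (g : probability (E * E)%type R) : Prop :=
  (forall B : set E, measurable B -> g (fst @^-1` B) = mu0 B) /\
  (forall B : set E, measurable B -> g (snd @^-1` B) = mu1 B).

Definition W2sq (mu0 mu1 : probability E R) : \bar R :=
  ereal_inf [set (\int[g]_z (enorm2 (z.1 - z.2))%:E)%E
            | g in [set g | coupling mu0 mu1 g]].

Definition psd (A : 'M[R]_d) : Prop :=
  A^T = A /\ forall x : 'rV[R]_d, 0 <= (x *m A *m x^T) 0 0.

(* The linear map x |-> A x, written on row vectors. *)
Definition linmap (A : 'M[R]_d) (x : E) : E := x *m A^T.

Definition interp (A : 'M[R]_d) (t : R) (x : E) : E :=
  (1 - t) *: x + t *: linmap A x.

End Defs2.

(* Main.v *)
Require Import Defs.
From HB Require Import structures.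
From mathcomp Require Import all_boot all_order all_algebra.
From mathcomp Require Import all_classical all_reals all_analysis.
From mathcomp Require Import ring lra measurable_realfun.
Import Order.TTheory GRing.Theory Num.Theory.
Import numFieldNormedType.Exports.
Local Open Scope classical_set_scope.
Local Open Scope ring_scope.

Section H.
Context (R : realType) (d : nat).
Local Notation E := (Rd R d).

Lemma CS (a b : 'I_d -> R) :
  (\sum_i a i * b i) ^+ 2 <= (\sum_i a i ^+ 2) * (\sum_i b i ^+ 2).
Proof.
have H1 : (\sum_i a i * b i) ^+ 2 = \sum_i \sum_k (a i * b i * (a k * b k)).
  by rewrite expr2 mulr_suml; apply: eq_bigr => i _; rewrite mulr_sumr.
have H2 : (\sum_i a i ^+ 2) * (\sum_i b i ^+ 2) = \sum_i \sum_k (a i ^+ 2 * b k ^+ 2).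
  by rewrite mulr_suml; apply: eq_bigr => i _; rewrite mulr_sumr.
have H3 : \sum_i \sum_k (a i ^+ 2 * b k ^+ 2) = \sum_i \sum_k (a k ^+ 2 * b i ^+ 2).
  by rewrite exchange_big.
rewrite H1 H2.
rewrite -(ler_pM2l (_ : 0 < 2%:R)) // mulr2n !mulrDl !mul1r.
rewrite [X in _ <= X + _]H3 -!big_split /=.
apply: ler_sum => i _; rewrite -!big_split /=; apply: ler_sum => k _.
have := sqr_ge0 (a i * b k - a k * b i); nra.
Qed.

Lemma coord_le (v : 'rV[R]_d) i : (v 0 i) ^+ 2 <= enorm2 v.
Proof.
rewrite /enorm2 (bigD1 i) //= lerDl; apply: sumr_ge0 => j _; exact: sqr_ge0.
Qed.

Lemma enorm2_ge0 (v : 'rV[R]_d) : 0 <= enorm2 v.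
Proof. apply: sumr_ge0 => j _; exact: sqr_ge0. Qed.

Lemma lin_bound (M : 'M[R]_d) : exists K : R, 0 <= K /\
  forall v : 'rV[R]_d, enorm2 (v *m M) <= K * enorm2 v.
Proof.
exists (\sum_j \sum_i (M i j) ^+ 2); split.
  by apply: sumr_ge0 => j _; apply: sumr_ge0 => i _; exact: sqr_ge0.
move=> v; rewrite /enorm2 mulr_suml; apply: ler_sum => j _.
rewrite mxE mulrC; exact: (CS (fun i => v 0 i) (fun i => M i j)).
Qed.

Lemma eopen_meas (U : set E) : eopen U -> measurable U.
Proof. by move=> oU; apply: sub_sigma_algebra. Qed.

Lemma coord_meas i : measurable_fun setT (fun x : E => x 0 i).
Proof.
apply: (measurability _ (RGenOInfty.measurableE R)) => //.

move=> _ [_ [c ->] <-]; rewrite setTI; apply: sub_sigma_algebra.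
move=> y /=; rewrite in_itv /= andbT => cy; exists (y 0 i - c); first by rewrite subr_gt0.
move=> z /= zy; have := coord_le (z - y) i; rewrite !mxE => h.
have : (z 0 i - y 0 i) ^+ 2 < (y 0 i - c) ^+ 2 by exact: le_lt_trans h zy.
rewrite /= in_itv /= andbT => h2.
nra.
Qed.

Lemma enorm2B_meas (x : E) : measurable_fun setT (fun y : E => enorm2 (y - x)).
Proof.
rewrite /enorm2.
have -> : (fun y : E => \sum_(i < d) (y - x) 0 i ^+ 2) =
          (fun y : E => \sum_(i <- index_enum 'I_d) (y 0 i - x 0 i) ^+ 2).
  by apply: funext => y; apply: eq_bigr => i _; rewrite !mxE.
apply: measurable_sum => i; apply: measurable_funX.
apply: measurable_funB; [exact: coord_meas | exact: measurable_cst].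
Qed.

Lemma eball_meas (x : E) e : measurable (eball x e : set E).
Proof.
have -> : (eball x e : set E) = setT `&` (fun y : E => enorm2 (y - x)) @^-1` `]-oo, e ^+ 2[.
  by apply/seteqP; split => y /=; rewrite ?in_itv /=; [move=> h; split|case].
apply: enorm2B_meas => //; exact: measurable_itv.
Qed.

Lemma lin_meas (M : 'M[R]_d) : measurable_fun setT (fun x : E => (x *m M : E)).
Proof.
apply: (measurability _ (erefl (@measurable _ E))) => //.
move=> _ [B oB <-]; rewrite setTI; apply: sub_sigma_algebra.
have [K [K0 HK]] := lin_bound M.
move=> x /= Bx; have [e e0 he] := oB _ Bx.
exists (e / (K + 1)); first by rewrite divr_gt0 // ltr_wpDl.
move=> y /= hy; apply: he; rewrite /eball /= -mulmxBl.
apply: (le_lt_trans (HK _)).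
have n0 := enorm2_ge0 (y - x).
move: hy; rewrite /eball /= expr_div_n => hy.
have K1 : 0 < (K + 1) ^+ 2 by rewrite exprn_gt0 // ltr_wpDl.
rewrite ltr_pdivlMr // in hy.
nra.
Qed.

Lemma enorm2_meas : measurable_fun setT (fun y : E => enorm2 y).
Proof.
have := enorm2B_meas 0.
by under eq_fun do rewrite subr0.
Qed.

Lemma enorm2_lin_meas (M : 'M[R]_d) : measurable_fun setT (fun x : E => enorm2 (x *m M)).
Proof.
rewrite /enorm2.
have -> : (fun y : E => \sum_(j < d) (y *m M) 0 j ^+ 2) =
   (fun y : E => \sum_(j <- index_enum 'I_d) (\sum_(i <- index_enum 'I_d) y 0 i * M i j) ^+ 2).
  by apply: funext => y; apply: eq_bigr => j _; rewrite !mxE.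
apply: measurable_sum => j; apply: measurable_funX.
apply: measurable_sum => i; apply: measurable_funM; [exact: coord_meas | exact: measurable_cst].
Qed.

Lemma moment_push (mu : probability E R) (M : 'M[R]_d) :
  finite_second_moment mu ->
  finite_second_moment (pushforward mu (fun x : E => (x *m M : E))).
Proof.
rewrite /finite_second_moment => hmu.
have [K [K0 HK]] := lin_bound M.
have mE : measurable_fun setT (fun y : E => (enorm2 y)%:E).
  exact: measurableT_comp enorm2_meas.
rewrite ge0_integral_pushforward //; first last.
  - by move=> y _; rewrite lee_fin enorm2_ge0.
  - exact: lin_meas.
rewrite preimage_setT.
have mf1 : measurable_fun setT (fun x : E => (enorm2 (x *m M))%:E).
  exact: measurableT_comp (enorm2_lin_meas M).
have mf2 : measurable_fun setT (fun x : E => (K%:E * (enorm2 x)%:E)%E).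
  have -> : (fun x : E => (K%:E * (enorm2 x)%:E)%E) = (fun x => (K * enorm2 x)%:E).
    by apply: funext => x; rewrite EFinM.
  apply: measurableT_comp => //; apply: measurable_funM => //; exact: enorm2_meas.
apply: (le_lt_trans (y := (\int[mu]_x (K%:E * (enorm2 x)%:E))%E)).
  apply: (@ge0_le_integral _ _ _ mu setT measurableT (fun x : E => (enorm2 (x *m M))%:E)) => //.
  - by move=> x _; rewrite lee_fin enorm2_ge0.
  - by move=> x _ /=; rewrite -EFinM lee_fin.
rewrite ge0_integralZl_EFin //; last by move=> x _; rewrite lee_fin enorm2_ge0.
have i0 : (0 <= \int[mu]_x (enorm2 x)%:E)%E.
  by apply: integral_ge0 => x _; rewrite lee_fin enorm2_ge0.
have : (\int[mu]_x (enorm2 x)%:E)%E \is a fin_num.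
  by rewrite ge0_fin_numE.
move=> /fineK <-; rewrite -EFinM; exact: ltry.
Qed.

Lemma supp_push (mu : probability E R) (M : 'M[R]_d) (x : E) :
  msupport mu x -> msupport (pushforward mu (fun x : E => (x *m M : E))) (x *m M).
Proof.
move=> hx e e0.
have [K [K0 HK]] := lin_bound M.
have e'0 : 0 < e / (K + 1) by rewrite divr_gt0 // ltr_wpDl.
apply: (lt_le_trans (hx _ e'0)).
rewrite /pushforward; apply: le_measure; rewrite ?inE.
- exact: eball_meas.
- have := lin_meas M measurableT _ (eball_meas (x *m M) e); rewrite setTI; exact.
move=> y /= hy; rewrite /eball /= -mulmxBl.
apply: (le_lt_trans (HK _)).
have n0 := enorm2_ge0 (y - x).
move: hy; rewrite /eball /= expr_div_n => hy.
have K1 : 0 < (K + 1) ^+ 2 by rewrite exprn_gt0 // ltr_wpDl.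
rewrite ltr_pdivlMr // in hy.
nra.
Qed.

Lemma span_push (mu : probability E R) (M : 'M[R]_d) :
  M \in unitmx -> spans_Rd (msupport mu) ->
  spans_Rd (msupport (pushforward mu (fun x : E => (x *m M : E)))).
Proof.
move=> uM; rewrite /spans_Rd => hs.
apply/seteqP; split => // v _.
have : lin_span (msupport mu) (v *m invmx M) by rewrite hs.
case=> n [c [x [hx hv]]].
exists n, c, (fun j => x j *m M); split.
  by move=> j; exact: supp_push.
rewrite -[LHS](mulmxKV uM v) hv mulmx_suml.
by apply: eq_bigr => j _; rewrite scalemxAl.
Qed.

Lemma enorm2_mx (v : 'rV[R]_d) : enorm2 v = (v *m v^T) 0 0.
Proof. by rewrite /enorm2 !mxE; apply: eq_bigr => j _; rewrite !mxE expr2. Qed.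

Lemma unit_interp (A : 'M[R]_d) (t : R) : psd A -> 0 <= t -> t < 1 ->
  ((1 - t)%:M + t *: A^T) \in unitmx.
Proof.
move=> [sym pos] t0 t1; rewrite -row_free_unit; apply: inj_row_free => v hv.
have e00 : forall a b (X Y : 'M[R]_1), (a *: X + b *: Y) 0 0 = a * X 0 0 + b * Y 0 0.
  by move=> a b X Y; rewrite !mxE.
have h : (v *m ((1 - t)%:M + t *: A^T) *m v^T) 0 0 =
   (1 - t) * enorm2 v + t * (v *m A *m v^T) 0 0.
  rewrite mulmxDr mul_mx_scalar -scalemxAr sym mulmxDl -!scalemxAl e00.
  by rewrite enorm2_mx.
rewrite hv mul0mx mxE in h.
have Q := pos v; have n0 := enorm2_ge0 v.
have en : enorm2 v = 0 by nra.
apply/rowP => j; rewrite mxE.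
have := coord_le v j; rewrite en => hj.
nra.
Qed.
End H.

Theorem mainTheorem11 (R : realType) (d : nat)
  (mu0 mu1 : probability (Rd R d) R) (A : 'M[R]_d) :
  prob_frame mu0 -> prob_frame mu1 ->
  abs_cont_leb mu0 -> abs_cont_leb mu1 ->
  psd A ->
  (forall B : set (Rd R d), measurable B ->
     mu1 B = mu0 (linmap A @^-1` B)) ->
  (\int[mu0]_x (enorm2 (x - linmap A x))%:E = W2sq mu0 mu1)%E ->
  forall t : R, 0 <= t <= 1 ->
    spans_Rd (msupport (pushforward mu0 (interp A t))) /\
    frame_conditions (pushforward mu0 (interp A t)).
Proof.
move=> [hm0 hs0] [hm1 hs1] _ _ hA hpush _ t /andP [t0 t1].
have key : interp A t = (fun x : Rd R d => (x *m ((1 - t)%:M + t *: A^T) : Rd R d)).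
  apply: funext => x; rewrite /interp /linmap.
  by rewrite mulmxDr mul_mx_scalar -scalemxAr.
have hsp : spans_Rd (msupport (pushforward mu0 (interp A t))).
  move: t1; rewrite le_eqVlt => /orP [/eqP t1 | t1].
  - have -> : interp A t = linmap A.
      by apply: funext => x; rewrite /interp t1 subrr scale0r add0r scale1r.
    have -> : msupport (pushforward mu0 (linmap A)) = msupport mu1.
      apply/seteqP; split => x hx e e0.
      + by rewrite hpush; [exact: hx | exact: eball_meas].
      + by have := hx e e0; rewrite hpush //; exact: eball_meas.
    exact: hs1.
  - rewrite key; apply: span_push => //; exact: unit_interp.
split => //; split => //.
rewrite key; exact: moment_push.
Qed.
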